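(* Let $d\geq 2$ be even, and let $Q$ be a real hyperbolic polynomial of degree $d$ with positive leading coefficient and nonzero constant term which defines the moduli order admitting equalities $r_{PN}^0$ or $r_{NP}^0$. Then exactly one of the following holds: (i) $Q$ is even, i.e. $Q=A\prod_{j=1}^{d/2}(x^2-a_j^2)$ with $A>0$ and $a_j\in\mathbb{R}\setminus\{0\}$ not necessarily distinct. In this case the coefficients of $Q$ have signs $(+,0,-,0,+,0,-,0,\dots)$, read from the leading coefficient down to the constant term. (ii) All coefficients of $Q$ are nonzero, and the multiset of roots of $Q$ cannot be partitioned into $d/2$ pairs of the form $\{a_j,-a_j\}$. In this case $Q$ defines the sign pattern $\Sigma_+$ if it defines $r_{PN}^0$, and the sign pattern $\Sigma_-$ if it defines $r_{NP}^0$.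
   Context: A hyperbolic polynomial (HP) is a real univariate polynomial all of whose roots are real. A moduli order admitting equalities (MOAE) of length $d$ is a string of $d$ letters $P$/$N$ separated by $\leq$. A HP $Q$ of degree $d$ with nonzero constant term defines such a string if its $d$ roots, counted with multiplicity, can be listed as $z_1,\dots,z_d$ with $|z_1|\leq\dots\leq|z_d|$, where $z_i>0$ when the $i$-th letter is $P$ and $z_i<0$ when it is $N$. $r_{PN}^0$ is the alternating string $P\leq N\leq P\leq\dots\leq N$ (even length). $r_{NP}^0$ is $N\leq P\leq N\leq\dots\leq P$ (even length). The sign pattern of a polynomial $a_dx^d+\dots+a_0$ with all $a_j\neq0$ is $(\mathrm{sgn}(a_d),\dots,\mathrm{sgn}(a_0))$. $\Sigma_+=(+,+,-,-,+,+,\dots)$ has entry $+$ in position $k$ ($k=0,\dots,d$, the sign of the coefficient of $x^{d-k}$) iff $k\equiv0,1\pmod4$. $\Sigma_-=(+,-,-,+,+,-,-,+,\dots)$ has entry $+$ in position $k$ iff $k\equiv0,3\pmod4$. *)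

(* Defs.v *)
From HB Require Import structures.
From mathcomp Require Import all_boot all_order all_algebra.
Set Implicit Arguments. Unset Strict Implicit. Unset Printing Implicit Defensive.
Import Order.TTheory GRing.Theory Num.Theory.
Local Open Scope ring_scope.

Definition hyperbolic (R : realFieldType) (Q : {poly R}) : Prop :=
  exists s : seq R, Q = lead_coef Q *: \prod_(z <- s) ('X - z%:P).

(* A moduli order admitting equalities is encoded as a word w : seq bool,
   true = letter P, false = letter N. *)
Definition defines_moae (R : realFieldType) (Q : {poly R}) (w : seq bool) : Prop :=
  exists s : seq R,
    [/\ size s = size w,
        Q = lead_coef Q *: \prod_(z <- s) ('X - z%:P),
        sorted (fun x y : R => `|x| <= `|y|) s &
        forall i, (i < size w)%N ->
          (nth true w i -> 0 < s`_i) /\ (~~ nth true w i -> s`_i < 0)].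

Definition r_PN0 (d : nat) : seq bool := mkseq (fun i => ~~ odd i) d.
Definition r_NP0 (d : nat) : seq bool := mkseq (fun i => odd i) d.

(* Q (of degree d) defines the sign pattern sigma (position k = sign of the
   coefficient of x^(d-k), true = +, false = -); all coefficients nonzero. *)
Definition defines_sign_pattern (R : realFieldType) (Q : {poly R}) (d : nat)
    (sigma : nat -> bool) : Prop :=
  forall k, (k <= d)%N ->
    (sigma k -> 0 < Q`_(d - k)) /\ (~~ sigma k -> Q`_(d - k) < 0).

Definition Sigma_plus (k : nat) : bool := (k %% 4 == 0)%N || (k %% 4 == 1)%N.
Definition Sigma_minus (k : nat) : bool := (k %% 4 == 0)%N || (k %% 4 == 3)%N.

Definition even_poly_prop (R : realFieldType) (Q : {poly R}) : Prop :=
  forall i, odd i -> Q`_i = 0.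

Definition roots_pairable (R : realFieldType) (Q : {poly R}) : Prop :=
  exists s a : seq R,
    Q = lead_coef Q *: \prod_(z <- s) ('X - z%:P) /\
    perm_eq s (a ++ map (fun x => - x) a).

(* Main.v *)
Require Import Defs.
From HB Require Import structures.
From mathcomp Require Import all_boot all_order all_algebra.
From mathcomp Require Import zify ring lra.
Import Order.TTheory GRing.Theory Num.Theory.
Local Open Scope ring_scope.

Definition sgn (R : realFieldType) (k : nat) : R := if Sigma_plus k then 1 else -1.
Arguments sgn {R} k.
Lemma sgnSS (R : realFieldType) k : sgn (k.+2) = - sgn k :> R.
Proof. rewrite /sgn /Sigma_plus; case: ifP => H1; case: ifP => H2 //; try lia; by rewrite opprK. Qed.
Lemma sgnS (R : realFieldType) k : sgn (k.+1) = (if odd k then - sgn k else sgn k) :> R.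
Proof. rewrite /sgn /Sigma_plus; case: ifP => H0; case: ifP => H1; case: ifP=>H2 //; try lia; by rewrite opprK. Qed.

Definition INVr (R : realFieldType) (r : nat -> R) (m : nat) (M : R) (nz : bool) : Prop :=
 [/\ forall k, 0 <= r k,
     forall k, (k <= 2 * m)%N -> ~~ odd k -> 0 < r k,
     forall k, odd k -> r k <= M * r k.-1 &
     if nz then (0 < m)%N /\ (forall k, odd k -> (k < 2 * m)%N -> 0 < r k)
     else forall k, odd k -> r k = 0].

Arguments INVr {R}.
Lemma INVr_mono (R : realFieldType) (r : nat -> R) m M M' nz :
  INVr r m M nz -> M <= M' -> INVr r m M' nz.
Proof.
move=> [ha hb hc hd] hM; split => // k ok.
apply: le_trans (hc k ok) _; apply: ler_wpM2r => //.
Qed.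

Lemma INVr_step (R : realFieldType) (r r' : nat -> R) m M nz b c :
  INVr r m M nz -> M <= b -> 0 < b -> b <= c ->
  r' 0%N = r 0%N -> r' 1%N = r 1%N + (c - b) * r 0%N ->
  (forall j, r' j.+2 = r j.+2 + (c - b) * (if odd j then r j.+1 else - r j.+1) + b * c * r j) ->
  INVr r' m.+1 c (nz || (b < c)).
Proof.
move=> [ha hb hc hd] hMb hb0 hbc H0 H1 H2.
have cb0 : 0 <= c - b by lra.
have Hev : forall j, ~~ odd j -> r j.+2 + b * b * r j <= r' j.+2.
  move=> j oj; rewrite H2 (negbTE oj).
  have h := hc j.+1; rewrite /= oj in h; have {}h := h isT.
  have h1 : M * r j <= b * r j by apply: ler_wpM2r.
  have h2 : (c - b) * r j.+1 <= (c - b) * (b * r j).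
    apply: ler_wpM2l => //; exact: le_trans h h1.
  have := ha j; nra.
have Hodd : forall j, odd j -> r j.+2 + (c - b) * r j.+1 + b * c * r j = r' j.+2.
  by move=> j oj; rewrite H2 oj.
split.
- case=> [|[|j]]; first by rewrite H0.
  + rewrite H1; have := ha 1%N; have := ha 0%N; nra.
  + case: (boolP (odd j)) => oj.
    * rewrite -Hodd //; have := ha j.+2.
      have : 0 <= (c - b) * r j.+1 by rewrite mulr_ge0.
      have : 0 <= b * c * r j by rewrite !mulr_ge0 //; lra.
      lra.
    * apply: le_trans (Hev j oj); have := ha j.+2.
      have : 0 <= b * b * r j by rewrite !mulr_ge0 //; lra.
      lra.
- case=> [|[|j]] hk ok //; first by rewrite H0; apply: hb.
  rewrite /= negbK in ok.
  apply: lt_le_trans (Hev j ok).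
  have := hb j (ltac:(lia)) ok => hj; have := ha j.+2.
  have : 0 < b * b * r j by rewrite !mulr_gt0.
  lra.
- case=> [|[|[|i]]] ok //.
  + rewrite H1 H0 /=; have := hc 1%N isT; rewrite /=.
    have := ha 0%N; have := ha 1%N; nra.
  + rewrite /= negbK in ok. rewrite -Hodd /= ?ok // H2 (negbTE ok).
    have h3 := hc i.+3; rewrite /= ok in h3; have {}h3 := h3 isT.
    have h1 := hc i.+1; rewrite /= ok in h1; have {}h1 := h1 isT.
    have h3' : M * r i.+2 <= b * r i.+2 by apply: ler_wpM2r.
    have h1' : M * r i <= b * r i by apply: ler_wpM2r.
    have h1'' : c * c * r i.+1 <= c * c * (b * r i).
      apply: ler_wpM2l; [nra | lra].
    lra.
- case: nz hd => [[m0 hd]|hd] /=.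
  + split=> // -[|[|j]] // ok hk.
    * rewrite H1; have := hd 1%N isT (ltac:(lia)).
      have : 0 <= (c - b) * r 0%N by rewrite mulr_ge0.
      lra.
    * rewrite /= negbK in ok; rewrite -Hodd //.
      have := hd j ok (ltac:(lia)) => hj.
      have : 0 < b * c * r j by rewrite !mulr_gt0 //; lra.
      have := ha j.+2; have : 0 <= (c - b) * r j.+1 by rewrite mulr_ge0.
      lra.
  + case: ifP => bc.
    * split=> // -[|[|j]] // ok hk.
      - rewrite H1; have := hb 0%N (leq0n _) isT => h0.
        have : 0 < (c - b) * r 0%N by rewrite mulr_gt0 // subr_gt0.
        have := ha 1%N; lra.
      - rewrite /= negbK in ok; rewrite -Hodd //.
        have := hb j.+1 (ltac:(lia)) (ltac:(rewrite /= ok //)) => hj.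
        have : 0 < (c - b) * r j.+1 by rewrite mulr_gt0 // subr_gt0.
        have : 0 <= b * c * r j by rewrite !mulr_ge0 //; lra.
        have := ha j.+2; lra.
    * have ebc : c = b by move/negbT: bc; rewrite -leNgt => h; apply/le_anti/andP.
      move=> -[|[|j]] // ok.
      - by rewrite H1 hd // ebc subrr mul0r addr0.
      - rewrite /= negbK in ok; rewrite -Hodd; last by [].
        rewrite ebc subrr mul0r addr0 !hd /= ?negbK //.
        by rewrite mulr0 addr0.
Qed.
Definition T (R : realFieldType) (P : {poly R}) (D k : nat) : R :=
  if (k <= D)%N then P`_(D - k) else 0.

Arguments T {R}.
Lemma T_rec (R : realFieldType) (P : {poly R}) D u w :
  (forall j, (D < j)%N -> P`_j = 0) ->
  forall k, T (P * ('X - u%:P) * ('X - w%:P)) D.+2 k =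
    T P D k + (if k is k'.+1 then -(u+w) * T P D k' else 0)
            + (if k is k'.+2 then u * w * T P D k' else 0).
Proof.
move=> HP k.
have EN : P * ('X - u%:P) * ('X - w%:P) =
   'X^2 * P + (-(u+w))%:P * ('X * P) + (u*w)%:P * P.
  rewrite polyCN polyCD polyCM; ring.
rewrite EN /T !coefD coefXnM !coefCM coefXM.
case: k => [|[|k]].
- rewrite !subn0 leq0n.
  have -> : (D.+2 < 2)%N = false by lia.
  have -> : (D.+2 - 2 = D)%N by lia.
  have -> : (D.+2 == 0)%N = false by [].
  rewrite (HP D.+1) ?(HP D.+2) //= !mulr0 !addr0; by rewrite ?subn0.
- rewrite subn0 leq0n; have -> : (0 < D.+2)%N by [].
  have -> : (D.+2 - 1 = D.+1)%N by lia.
  have -> : (D.+1 == 0)%N = false by [].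
  rewrite (HP D.+1) // mulr0 addr0 /=.
  case: (posnP D) => hD.
  + subst D; by rewrite /= addr0 add0r.
  + have -> : (D.+1 < 2)%N = false by lia.
    have -> : (D.+1 - 2 = D - 1)%N by lia.
    by rewrite addr0.
- case: (leqP k D) => hk.
  + try (have -> : (k.+1 < D.+2)%N by lia).
    try (have -> : (k <= D)%N by lia).
    try (have -> : (D.+2 - k.+2 = D - k)%N by lia).
    case: (leqP k.+2 D) => h2.
    * try (have -> : (D - k < 2)%N = false by lia).
      try (have -> : (D - k == 0)%N = false by lia).
      try (have -> : (k < D)%N by lia).
      try (have -> : (k.+1 < D)%N by lia).
      try (have -> : (D - k - 2 = D - k.+2)%N by lia).
      try (have -> : ((D - k).-1 = D - k.+1)%N by lia).
      done.
    * try (have -> : (D - k < 2)%N = true by lia).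
      try (have -> : (k.+1 < D)%N = false by lia).
      case: (leqP k.+1 D) => h1.
      - try (have -> : (D - k == 0)%N = false by lia).
        try (have -> : (k < D)%N by lia).
        try (have -> : ((D - k).-1 = D - k.+1)%N by lia).
        by rewrite add0r.
      - try (have -> : (D - k == 0)%N = true by lia).
        try (have -> : (k < D)%N = false by lia).
        by rewrite mulr0 add0r.
  + rewrite !ifF; try lia.
    by rewrite !mulr0 !addr0.
Qed.

Definition rp (R : realFieldType) (eps : R) (P : {poly R}) (D k : nat) : R :=
  eps ^+ k * sgn k * T P D k.

Arguments rp {R}.
Lemma rp_rec (R : realFieldType) (eps : R) (P : {poly R}) D u w :
  (forall j, (D < j)%N -> P`_j = 0) ->
  let N := P * ('X - u%:P) * ('X - w%:P) in
  let b := eps * u in let c := - (eps * w) in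
  [/\ rp eps N D.+2 0 = rp eps P D 0,
      rp eps N D.+2 1 = rp eps P D 1 + (c - b) * rp eps P D 0 &
      forall j, rp eps N D.+2 j.+2 = rp eps P D j.+2 +
        (c - b) * (if odd j then rp eps P D j.+1 else - rp eps P D j.+1)
        + b * c * rp eps P D j].
Proof.
move=> HP N b c; rewrite /rp /N /b /c; split.
- by rewrite T_rec // !addr0.
- rewrite T_rec // addr0 /sgn /=; ring.
- move=> j; rewrite T_rec // sgnSS sgnS !exprS.
  case: (odd j); ring.
Qed.


Lemma key (R : realFieldType) (eps : R) (heps : eps = 1 \/ eps = -1) (n : nat) :
  forall s : seq R, size s = (2 * n)%N ->
  sorted (fun x y : R => `|x| <= `|y|) s ->
  (forall i, (i < 2 * n)%N -> (~~ odd i -> 0 < eps * s`_i) /\ (odd i -> eps * s`_i < 0)) ->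
  forall M : R, 0 <= M -> (forall z, z \in s -> `|z| <= M) ->
  exists nz, INVr (rp eps (\prod_(z <- s) ('X - z%:P)) (2 * n)) n M nz /\
    (nz = false -> exists a : seq R, [/\ size a = n, all (fun x => x != 0) a &
       \prod_(z <- s) ('X - z%:P) = \prod_(x <- a) ('X^2 - (x ^+ 2)%:P)]).
Proof.
have e2 : eps * eps = 1 by case: heps => ->; rewrite ?mulr1 ?mulrNN ?mulr1.
have eN : `|eps| = 1 by case: heps => ->; rewrite ?normr1 ?normrN1.
elim: n => [|n IH] s.
- move=> /size0nil -> _ _ M M0 _; exists false; split; last first.
    by move=> _; exists [::]; rewrite !big_nil.
  rewrite big_nil /rp /T; split.
  + case=> [|k] /=; first by rewrite expr0 /sgn /= !mul1r coef1.
    by rewrite mulr0.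
  + case=> // _ _; rewrite expr0 /sgn /= !mul1r coef1 /=; lra.
  + case=> // k _ /=; rewrite !coef1 /= !mulr0.
    case: k => [|k] /=; rewrite ?mulr0 ?mulr1 ?expr0 /sgn /= ?mul1r //.
  + by case=> // k _; rewrite muln0 /= mulr0.
- move=> Hs srt sg M M0 HM.
  case/lastP: s Hs srt sg HM => [|s' w]; first by rewrite /=; lia.
  case/lastP: s' => [|s1 u]; first by rewrite size_rcons /=; lia.
  have -> : rcons (rcons s1 u) w = s1 ++ [:: u; w] by rewrite -!cats1 -catA.
  move=> Hs srt sg HM.
  have Hs1 : size s1 = (2 * n)%N by move: Hs; rewrite size_cat /=; lia.
  have nth1 : forall i, (i < 2 * n)%N -> (s1 ++ [:: u; w])`_i = s1`_i.
    by move=> i hi; rewrite nth_cat Hs1 hi.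
  have nthu : (s1 ++ [:: u; w])`_(2 * n) = u by rewrite nth_cat Hs1 ltnn subnn.
  have nthw : (s1 ++ [:: u; w])`_(2 * n).+1 = w.
    by rewrite nth_cat Hs1 ltnNge leqnSn /= subSn // subnn.
  have tr : transitive (fun x y : R => `|x| <= `|y|) by move=> y x z; apply: le_trans.
  have srtn := sorted_ltn_nth tr 0 srt.
  have Hsz : size (s1 ++ [:: u; w]) = (2 * n).+2 by rewrite Hs; lia.
  have uw : `|u| <= `|w|.
    have := srtn (2 * n)%N (2 * n).+1; rewrite !inE Hsz nthu nthw; apply => //; lia.
  have s1u : forall z, z \in s1 -> `|z| <= `|u|.
    move=> z /(nthP 0) [i hi <-]; rewrite Hs1 in hi.
    have := srtn i (2 * n)%N; rewrite !inE Hsz nthu nth1 //; apply => //; lia.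
  have [sgu _] := sg (2 * n)%N (ltac:(lia)); rewrite nthu in sgu.
  have [_ sgw] := sg (2 * n).+1 (ltac:(lia)); rewrite nthw in sgw.
  have {sgu}sgu := sgu (ltac:(rewrite mul2n odd_double //)).
  have {sgw}sgw := sgw (ltac:(rewrite /= mul2n odd_double //)).
  have nu : `|u| = eps * u by rewrite -(mul1r `|u|) -eN -normrM gtr0_norm.
  have nw : `|w| = - (eps * w) by rewrite -(mul1r `|w|) -eN -normrM ltr0_norm.
  have srt1 : sorted (fun x y : R => `|x| <= `|y|) s1 by case: (cat_sorted2 srt).
  have sg1 : forall i, (i < 2 * n)%N -> (~~ odd i -> 0 < eps * s1`_i) /\ (odd i -> eps * s1`_i < 0).
    by move=> i hi; rewrite -nth1 //; apply: sg; lia.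
  have [nz [Hinv Hrep]] := IH s1 Hs1 srt1 sg1 `|u| (normr_ge0 _) s1u.
  have HP : forall j, (2 * n < j)%N -> (\prod_(z <- s1) ('X - z%:P))`_j = 0.
    move=> j hj; apply: nth_default; rewrite size_prod_XsubC; lia.
  have [R0 R1 R2] := @rp_rec R eps _ _ u w HP.
  have Eprod : \prod_(z <- s1 ++ [:: u; w]) ('X - z%:P) =
      \prod_(z <- s1) ('X - z%:P) * ('X - u%:P) * ('X - w%:P).
    by rewrite big_cat /= big_cons big_seq1 mulrA.
  have E2 : (2 * n.+1 = (2 * n).+2)%N by lia.
  exists (nz || (eps * u < - (eps * w))); split.
  + have hwM : `|w| <= M by apply: HM; rewrite mem_cat !inE eqxx !orbT.
    apply: (@INVr_mono R _ _ `|w| _ _ _ hwM).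
    rewrite nw Eprod E2; apply: (@INVr_step R _ _ n `|u| nz (eps*u) (-(eps*w)) Hinv) => //.
    * by rewrite nu.
    * by rewrite -nu -nw.
  + case: nz Hinv Hrep => // Hinv Hrep /= /negbT; rewrite -leNgt => hcb.
    have ebc : eps * u = - (eps * w) by apply/le_anti; rewrite hcb -nu -nw uw.
    have ewu : w = - u by case: heps ebc => -> ; lra.
    have [a [Ha1 Ha2 Ha3]] := Hrep erefl.
    exists (rcons a u); split.
    * by rewrite size_rcons Ha1.
    * rewrite all_rcons Ha2 andbT; apply/eqP => u0; by move: sgu; rewrite u0 mulr0 ltxx.
    * rewrite Eprod Ha3 big_rcons /= -mulrA ewu polyCN.
      congr (_ * _); rewrite polyC_exp; ring.
Qed.


Lemma sum_abs_ge (R : realFieldType) (s : seq R) z :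
  z \in s -> `|z| <= \sum_(y <- s) `|y|.
Proof.
elim: s => // y s IH; rewrite inE big_cons => /orP [/eqP->|/IH h].
- have : 0 <= \sum_(y <- s) `|y| by apply: sumr_ge0.
  lra.
- have := normr_ge0 y; lra.
Qed.

Lemma analyze (R : realFieldType) (Q : {poly R}) (n : nat) (eps : R) (w : seq bool) :
  (eps = 1 \/ eps = -1) -> 0 < lead_coef Q -> size w = (2 * n)%N ->
  (forall i, (i < 2 * n)%N -> nth true w i = addb (eps == 1) (odd i)) ->
  defines_moae Q w ->
  ((exists a, [/\ size a = n, all (fun x => x != 0) a &
      Q = lead_coef Q *: \prod_(x <- a) ('X^2 - (x ^+ 2)%:P)]) /\
   (forall k, (k <= 2 * n)%N -> odd k -> Q`_(2 * n - k) = 0) /\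
   (forall k, (k <= 2 * n)%N -> ~~ odd k -> 0 < sgn k * Q`_(2 * n - k)))
  \/ (forall k, (k <= 2 * n)%N -> 0 < eps ^+ k * sgn k * Q`_(2 * n - k)).
Proof.
move=> heps lc Hw hw [s [Hs EQ srt Hsg]].
rewrite Hw in Hs Hsg.
have sg : forall i, (i < 2 * n)%N -> (~~ odd i -> 0 < eps * s`_i) /\ (odd i -> eps * s`_i < 0).
  move=> i hi; have [h1 h2] := Hsg i hi; rewrite hw // in h1 h2.
  case: heps => He; rewrite He in h1 h2 *.
  - rewrite eqxx /= in h1 h2; rewrite !mul1r; split => o; [exact: h1 | apply: h2; by rewrite o].
  - have hn : ((-1 : R) == 1) = false by apply/negbTE/eqP => h; lra.
    rewrite hn /= in h1 h2; split => o.
    + have := h2 (ltac:(rewrite o //)); lra.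
    + have := h1 o; lra.
have HM0 : 0 <= \sum_(y <- s) `|y| by apply: sumr_ge0.
have [nz [[ha hb hc hd] Hrep]] := @key R eps heps n s Hs srt sg _ HM0
   (fun z hz => @sum_abs_ge R s z hz).
set P := \prod_(z <- s) ('X - z%:P) in EQ ha hb hc hd Hrep.
have Er : forall k, (k <= 2 * n)%N -> rp eps P (2 * n) k = eps ^+ k * sgn k * P`_(2 * n - k).
  by move=> k hk; rewrite /rp /T hk.
have EQc : forall j, Q`_j = lead_coef Q * P`_j by move=> j; rewrite {1}EQ coefZ.
have sgn0 : forall k, sgn k != 0 :> R.
  by move=> k; rewrite /sgn; case: ifP => _; [exact: oner_neq0 | rewrite oppr_eq0 oner_neq0].
have eps0 : eps != 0 by case: heps => ->; [exact: oner_neq0 | rewrite oppr_eq0 oner_neq0].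
case: nz hd Hrep => [[n0 hd] _|hd Hrep].
- right => k hk; rewrite EQc mulrCA; apply: mulr_gt0 => //; rewrite -Er //.
  case: (boolP (odd k)) => ok; last exact: hb.
  apply: hd => //; move: ok hk; rewrite leq_eqVlt => ok /orP [/eqP hk|//].
  by move: ok; rewrite hk mul2n odd_double.
- left; split; last split.
  + have [a [h1 h2 h3]] := Hrep erefl; exists a; split => //; by rewrite {1}EQ h3.
  + move=> k hk ok; have := hd k ok; rewrite Er // EQc => /eqP.
    rewrite !mulf_eq0 expf_eq0 (negbTE eps0) (negbTE (sgn0 k)) andbF /= => /eqP ->.
    by rewrite mulr0.
  + move=> k hk ok; have := hb k hk ok; rewrite Er //.
    have -> : eps ^+ k = 1.
      case: heps => ->; first exact: expr1n.
      by rewrite -signr_odd (negbTE ok) expr0.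
    rewrite mul1r EQc mulrCA => h; apply: mulr_gt0 => //.
Qed.


Lemma prodX2_odd (R : realFieldType) (a : seq R) i :
  odd i -> (\prod_(x <- a) ('X^2 - (x ^+ 2)%:P))`_i = 0.
Proof.
elim: a i => [|x a IH] i oi; first by rewrite big_nil coef1; case: i oi.
rewrite big_cons mulrBl coefB coefXnM coefCM (IH i oi) mulr0 subr0.
case: ifP => // h; apply: IH; move: oi h; case: i => [|[|i]] //=.
by rewrite negbK subn2.
Qed.

Lemma even_of_rep (R : realFieldType) (Q : {poly R}) A (a : seq R) :
  Q = A *: \prod_(x <- a) ('X^2 - (x ^+ 2)%:P) -> even_poly_prop Q.
Proof. by move=> -> i oi; rewrite coefZ prodX2_odd // mulr0. Qed.

Lemma prod_pair (R : realFieldType) (a : seq R) :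
  \prod_(z <- a ++ map (fun x => - x) a) ('X - z%:P) = \prod_(x <- a) ('X^2 - (x ^+ 2)%:P).
Proof.
transitivity (\prod_(x <- a) (('X - x%:P) * ('X - (- x)%:P))).
  by rewrite big_split big_cat big_map.
apply: eq_bigr => x _; rewrite polyCN polyC_exp; ring.
Qed.

Lemma pair_even (R : realFieldType) (Q : {poly R}) : roots_pairable Q -> even_poly_prop Q.
Proof.
move=> [s [a [EQ Hp]]]; apply: (@even_of_rep R Q (lead_coef Q) a).
by rewrite {1}EQ -prod_pair; congr (_ *: _); apply: perm_big.
Qed.

Lemma sgm (R : realFieldType) k : (-1) ^+ k * sgn k = (if Sigma_minus k then 1 else -1) :> R.
Proof.
rewrite -signr_odd /sgn /Sigma_plus /Sigma_minus.
case: ifP => H1; case: ifP => H2; case: (boolP (odd k)) => H0;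
  rewrite /= ?mulr1 ?mulrN1 ?opprK ?mul1r ?mulN1r //; lia.
Qed.


Theorem theorem1p10 (R : realFieldType) (d : nat) (Q : {poly R}) :
  (2 <= d)%N -> ~~ odd d ->
  hyperbolic Q -> size Q = d.+1 -> 0 < lead_coef Q -> Q`_0 != 0 ->
  defines_moae Q (r_PN0 d) \/ defines_moae Q (r_NP0 d) ->
  let caseI := even_poly_prop Q /\
      exists (A : R) (a : seq R),
        [/\ 0 < A, size a = d./2, all (fun x => x != 0) a &
            Q = A *: \prod_(x <- a) ('X^2 - (x ^+ 2)%:P)] in
  let caseII := (forall i, (i <= d)%N -> Q`_i != 0) /\ ~ roots_pairable Q in
  [/\ caseI <-> ~ caseII,
      caseI -> forall k, (k <= d)%N ->
        [/\ odd k -> Q`_(d - k) = 0,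
            (k %% 4 == 0)%N -> 0 < Q`_(d - k) &
            (k %% 4 == 2)%N -> Q`_(d - k) < 0] &
      caseII ->
        (defines_moae Q (r_PN0 d) -> defines_sign_pattern Q d Sigma_plus) /\
        (defines_moae Q (r_NP0 d) -> defines_sign_pattern Q d Sigma_minus)].
Proof.
move=> d2 dodd _ sz lc Q0 Hm.
have Ed : d = (2 * d./2)%N by rewrite mul2n -{1}(odd_double_half d) (negbTE dodd).
move: (d./2) Ed => n Ed; subst d.
have w1 : forall i, (i < 2 * n)%N -> nth true (r_PN0 (2 * n)) i = addb ((1 : R) == 1) (odd i).
  by move=> i hi; rewrite /r_PN0 nth_mkseq // eqxx.
have hn : ((-1 : R) == 1) = false by clear -lc; apply/negbTE/eqP => h; lra.
have w2 : forall i, (i < 2 * n)%N -> nth true (r_NP0 (2 * n)) i = addb ((-1 : R) == 1) (odd i).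
  by move=> i hi; rewrite /r_NP0 nth_mkseq // hn.
have PNa := @analyze R Q n 1 (r_PN0 (2 * n)) (or_introl erefl) lc (size_mkseq _ _) w1.
have NPa := @analyze R Q n (-1) (r_NP0 (2 * n)) (or_intror erefl) lc (size_mkseq _ _) w2.
move=> caseI caseII.
pose Adata := ((exists a, [/\ size a = n, all (fun x => x != 0) a &
      Q = lead_coef Q *: \prod_(x <- a) ('X^2 - (x ^+ 2)%:P)]) /\
   (forall k, (k <= 2 * n)%N -> odd k -> Q`_(2 * n - k) = 0) /\
   (forall k, (k <= 2 * n)%N -> ~~ odd k -> 0 < sgn k * Q`_(2 * n - k))).
have Bnz : forall eps : R, (forall k, (k <= 2 * n)%N -> 0 < eps ^+ k * sgn k * Q`_(2 * n - k)) ->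
    forall i, (i <= 2 * n)%N -> Q`_i != 0.
  move=> eps H i hi; have := H (2 * n - i)%N (leq_subr _ _); rewrite subKn //.
  by apply: contraTneq => ->; rewrite mulr0 ltxx.
have main : Adata \/ forall i, (i <= 2 * n)%N -> Q`_i != 0.
  case: Hm => Hm; [case: (PNa Hm) | case: (NPa Hm)] => H; (by left) || (right; exact: Bnz H).
have A1 : Adata -> Q`_1 = 0.
  move=> [_ [H _]]; have := H (2 * n - 1)%N (leq_subr _ _) (ltac:(lia)).
  by rewrite subKn //; lia.
have I1 : caseI -> Q`_1 = 0 by move=> [H _]; apply: H.
have AI : Adata -> caseI.
  move=> [[a [h1 h2 h3]] _]; split; first exact: even_of_rep h3.
  exists (lead_coef Q), a; split => //; by rewrite h1 mul2n doubleK.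
have BII : (forall i, (i <= 2 * n)%N -> Q`_i != 0) -> caseII.
  move=> H; split => // /pair_even He; have := H 1%N (ltac:(lia)); by rewrite He // eqxx.
have notboth : caseI -> caseII -> False.
  by move=> /I1 h [H _]; have := H 1%N (ltac:(lia)); rewrite h eqxx.
split.
- split; first by move=> hI hII; exact: notboth hI hII.
  move=> nII; case: main => [/AI //|/BII //].
- move=> hI k hk; case: main => [HA|HB]; last by exfalso; exact: notboth hI (BII HB).
  have [_ [Hodd Hev]] := HA; split.
  + exact: Hodd.
  + move=> h4; have := Hev k hk (ltac:(lia)).
    rewrite /sgn /Sigma_plus h4 /= mul1r //.
  + move=> h4; have := Hev k hk (ltac:(lia)).
    rewrite /sgn; have -> : Sigma_plus k = false by rewrite /Sigma_plus; lia.
    move=> h; clear -h; lra.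
- move=> hII; split => Hm'.
  + case: (PNa Hm') => [HA|HB].
      by exfalso; case: hII => H _; have := H 1%N (ltac:(lia)); rewrite A1 // eqxx.
    move=> k hk; have := HB k hk; rewrite expr1n mul1r /sgn.
    case: ifP => _ h; split => // _; lra.
  + case: (NPa Hm') => [HA|HB].
      by exfalso; case: hII => H _; have := H 1%N (ltac:(lia)); rewrite A1 // eqxx.
    move=> k hk; have := HB k hk; rewrite sgm.
    case: ifP => _ h; split => // _; lra.
Qed.
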